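(* Let $\sigma(u)=1/(1+e^{-u})$, $\sigma_\tau(u)=\sigma(u/\tau)$ for $\tau>0$, and let $z$ be a standard logistic random variable with density $p_Z(u)=\sigma(u)(1-\sigma(u))$. Let $\eta\in\mathbb{R}$ and let $\mathcal L:[0,1]\to\mathbb{R}$ be continuously differentiable. Consider the binary variable $x\in\{0,1\}$ with $P(x=1)=\sigma(\eta)$, whose true gradient is $\frac{d}{d\eta}\mathbb{E}[\mathcal L(x)]=p_Z(\eta)(\mathcal L(1)-\mathcal L(0))$, and the Gumbel-Softmax estimator $\hat G_\tau=\frac{d}{d\eta}\mathcal L(\sigma_\tau(\eta-z))$. Then $\lim_{\tau\to0^+}\mathbb{E}_z[\hat G_\tau]=p_Z(\eta)(\mathcal L(1)-\mathcal L(0))$, and the bias satisfies $\mathbb{E}_z[\hat G_\tau]-p_Z(\eta)(\mathcal L(1)-\mathcal L(0))=O(\tau)$ as $\tau\to0^+$. *)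

(* Defs.v *)
From Stdlib Require Import Reals.
From Coquelicot Require Export Coquelicot.
Open Scope R_scope.

Definition sigma (u : R) : R := / (1 + exp (- u)).

Definition sigma_tau (tau u : R) : R := sigma (u / tau).

Definition pZ (u : R) : R := sigma u * (1 - sigma u).

Definition G_hat (L : R -> R) (tau eta z : R) : R :=
  Derive (fun e => L (sigma_tau tau (e - z))) eta.

Definition E_z (f : R -> R) : R :=
  RInt_gen (fun z => f z * pZ z) (Rbar_locally m_infty) (Rbar_locally p_infty).

Definition ex_E_z (f : R -> R) : Prop :=
  ex_RInt_gen (fun z => f z * pZ z) (Rbar_locally m_infty) (Rbar_locally p_infty).

Definition C1_on_01 (L : R -> R) : Prop :=
  exists Lp : R -> R,
    (forall x, 0 <= x <= 1 -> is_derive L x (Lp x)) /\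
    (forall x, 0 <= x <= 1 ->
       filterlim Lp (within (fun y => 0 <= y <= 1) (locally x)) (locally (Lp x))).

(* Main.v *)
From Pilot Require Import Defs.
From Stdlib Require Import Reals.
From Coquelicot Require Import Coquelicot.
From Stdlib Require Import Lra FunctionalExtensionality.
Open Scope R_scope.
Notation sg := Pilot.Defs.sigma.

Lemma sigma_bounds u : 0 < sg u < 1.
Proof.
  unfold sg. pose proof (exp_pos (- u)) as H.
  split. apply Rinv_0_lt_compat; lra.
  rewrite <- Rinv_1. apply Rinv_lt_contravar; lra.
Qed.

Lemma one_minus_sigma u : 1 - sg u = sg (- u).
Proof.
  unfold sg. rewrite Ropp_involutive, exp_Ropp.
  pose proof (exp_pos u) as H1. field. lra.
Qed.

Lemma is_derive_sigma u : is_derive sg u (pZ u).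
Proof.
  unfold pZ. rewrite one_minus_sigma. unfold sg.
  pose proof (exp_pos u) as H1. pose proof (exp_pos (-u)) as H2.
  auto_derive. lra.
  rewrite Ropp_involutive, exp_Ropp. field. lra.
Qed.

Lemma pZ_bounds u : 0 < pZ u <= 1.
Proof.
  unfold pZ. pose proof (sigma_bounds u). nra.
Qed.

Lemma sigma_le_exp u : sg (- u) <= exp (- u).
Proof.
  unfold sg. rewrite Ropp_involutive, exp_Ropp.
  pose proof (exp_pos u) as H1.
  apply Rinv_le_contravar; lra.
Qed.

Lemma pZ_sym u : pZ (- u) = pZ u.
Proof. unfold pZ. rewrite !one_minus_sigma, Ropp_involutive. ring. Qed.

Lemma pZ_upper u : pZ u <= exp (- Rabs u).
Proof.
  destruct (Rle_dec 0 u).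
  - rewrite Rabs_right by lra. unfold pZ. rewrite one_minus_sigma.
    pose proof (sigma_bounds u). pose proof (sigma_bounds (-u)).
    pose proof (sigma_le_exp u). nra.
  - rewrite Rabs_left by lra. rewrite <- pZ_sym. unfold pZ. rewrite one_minus_sigma.
    rewrite Ropp_involutive.
    pose proof (sigma_bounds u). pose proof (sigma_bounds (-u)).
    pose proof (sigma_le_exp (-u)). rewrite Ropp_involutive in H1. nra.
Qed.

Lemma pZ_lower u : / (4 * exp (Rabs u)) <= pZ u.
Proof.
  assert (K : forall v, 0 <= v -> / (4 * exp v) <= pZ v).
  { intros v Hv. unfold pZ. rewrite one_minus_sigma. unfold sg.
    rewrite Ropp_involutive, exp_Ropp.
    pose proof (exp_pos v). pose proof (exp_ineq1_le v).
    rewrite <- Rinv_mult.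
    apply Rinv_le_contravar. apply Rmult_lt_0_compat.
    apply Rplus_lt_le_0_compat; [lra| left; apply Rinv_0_lt_compat; lra]. lra.
    assert (/ exp v <= 1). { rewrite <- Rinv_1. apply Rinv_le_contravar; lra. }
    nra. }
  destruct (Rle_dec 0 u).
  - rewrite Rabs_right by lra. apply K; lra.
  - rewrite Rabs_left by lra. rewrite <- pZ_sym. apply K; lra.
Qed.

Lemma pZ_moment u : Rabs u * pZ u <= 8 * pZ (u / 2).
Proof.
  pose proof (pZ_upper u). pose proof (pZ_lower (u/2)).
  assert (Rabs (u/2) = Rabs u / 2) as E.
  { unfold Rdiv. rewrite Rabs_mult, Rabs_inv, (Rabs_right 2) by lra. reflexivity. }
  rewrite E in H0. set (a := Rabs u) in *.
  assert (0 <= a) by apply Rabs_pos.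
  assert (Hx : exp a = exp (a/2) * exp (a/2)) by (rewrite <- exp_plus; f_equal; field).
  pose proof (exp_pos (a/2)). pose proof (exp_ineq1_le (a/2)).
  rewrite exp_Ropp, Hx in H.
  apply Rle_trans with (a * / (exp (a / 2) * exp (a / 2))).
  apply Rmult_le_compat_l; lra.
  apply Rle_trans with (8 * / (4 * exp (a/2))); [|lra].
  rewrite !Rinv_mult.
  assert (0 < / exp (a/2)) by (apply Rinv_0_lt_compat; lra).
  assert (a * / exp (a/2) <= 2). { apply Rmult_le_reg_r with (exp (a/2)); [lra|].
    rewrite Rmult_assoc, Rinv_l by lra. lra. }
  nra.
Qed.

Lemma is_derive_pZ u : is_derive pZ u (pZ u * (1 - 2 * sg u)).
Proof.
  unfold pZ at 1.
  eapply is_derive_ext.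
  { intro t. reflexivity. }
  pose proof (is_derive_mult sg (fun t => 1 - sg t) u (pZ u) (- pZ u) (is_derive_sigma u)) as H.
  assert (is_derive (fun t => 1 - sg t) u (- pZ u)).
  { replace (- pZ u) with (minus 0 (pZ u)) by (unfold minus, plus, opp; simpl; ring).
    exact (is_derive_minus (fun _ => 1) sg u 0 (pZ u) (is_derive_const 1 u) (is_derive_sigma u)). }
  specialize (H H0). 
  replace (pZ u * (1 - 2 * sg u)) with (plus (mult (pZ u) (1 - sg u)) (mult (sg u) (- pZ u))).
  apply H. intros; apply Rmult_comm.
  unfold plus, mult; simpl. unfold pZ. ring.
Qed.

Lemma pZ_lip a b : Rabs (pZ a - pZ b) <= Rabs (a - b).
Proof.
  destruct (MVT_gen pZ b a (fun u => pZ u * (1 - 2 * sg u))) as [c [_ Hc]].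
  - intros; apply is_derive_pZ.
  - intros x _. apply continuity_pt_filterlim. apply (ex_derive_continuous (V := R_NormedModule)). eexists; apply is_derive_pZ.
  - rewrite Hc, Rabs_mult. rewrite <- (Rmult_1_l (Rabs (a - b))) at 2.
    apply Rmult_le_compat_r. apply Rabs_pos.
    pose proof (pZ_bounds c). pose proof (sigma_bounds c).
    rewrite Rabs_mult. rewrite (Rabs_right (pZ c)) by lra.
    assert (Rabs (1 - 2 * sg c) <= 1) by (apply Rabs_le; lra). nra.
Qed.

Lemma lim_sigma_p : filterlim sg (Rbar_locally p_infty) (locally 1).
Proof.
  apply (filterlim_locally (F := Rbar_locally p_infty)). intros eps.
  exists (- ln eps). intros v Hv.
  change (Rabs (sg v - 1) < eps).
  rewrite <- Ropp_minus_distr, Rabs_Ropp, one_minus_sigma.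
  pose proof (sigma_le_exp v). pose proof (sigma_bounds (-v)).
  rewrite Rabs_right by lra.
  eapply Rle_lt_trans. apply H.
  rewrite <- (exp_ln eps) by apply cond_pos. apply exp_increasing. lra.
Qed.

Lemma lim_sigma_m : filterlim sg (Rbar_locally m_infty) (locally 0).
Proof.
  apply (filterlim_locally (F := Rbar_locally m_infty)). intros eps.
  exists (ln eps). intros v Hv.
  change (Rabs (sg v - 0) < eps).
  rewrite Rminus_0_r.
  pose proof (sigma_le_exp (-v)). pose proof (sigma_bounds v).
  rewrite Ropp_involutive in H.
  rewrite Rabs_right by lra.
  eapply Rle_lt_trans. apply H.
  rewrite <- (exp_ln eps) by apply cond_pos. apply exp_increasing. lra.
Qed.

Lemma lin_m (eta c : R) : 0 < c ->
  filterlim (fun z => (eta - z) / c) (Rbar_locally m_infty) (Rbar_locally p_infty).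
Proof.
  intros Hc P [M HM]. exists (eta - Rmax M 0 * c). intros x Hx. apply HM.
  apply Rmult_lt_reg_r with c; [lra|]. unfold Rdiv. rewrite Rmult_assoc, Rinv_l by lra.
  pose proof (Rmax_l M 0). pose proof (Rmax_r M 0). nra.
Qed.

Lemma lin_p (eta c : R) : 0 < c ->
  filterlim (fun z => (eta - z) / c) (Rbar_locally p_infty) (Rbar_locally m_infty).
Proof.
  intros Hc P [M HM]. exists (eta - Rmin M 0 * c). intros x Hx. apply HM.
  apply Rmult_lt_reg_r with c; [lra|]. unfold Rdiv. rewrite Rmult_assoc, Rinv_l by lra.
  pose proof (Rmin_l M 0). pose proof (Rmin_r M 0). nra.
Qed.

Lemma ftc_gen (f F : R -> R) la lb :
  (forall x, is_derive F x (f x)) -> (forall x, continuous f x) ->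
  filterlim F (Rbar_locally m_infty) (locally la) ->
  filterlim F (Rbar_locally p_infty) (locally lb) ->
  is_RInt_gen f (Rbar_locally m_infty) (Rbar_locally p_infty) (lb - la).
Proof.
  intros HD HC Ha Hb.
  apply (is_RInt_gen_ext (Derive F)).
  { apply filter_forall. intros ab x _. apply is_derive_unique, HD. }
  apply (is_RInt_gen_Derive F la lb); auto.
  - apply filter_forall. intros ab x _. eexists; apply HD.
  - apply filter_forall. intros ab x _.
    apply (continuous_ext f). intro t. symmetry. apply is_derive_unique, HD. apply HC.
Qed.

Lemma RInt_bound (f g Gf : R -> R) x y :
  (forall x, continuous f x) -> (forall x, continuous g x) ->
  (forall x, is_derive Gf x (g x)) -> (forall x, Rabs (f x) <= g x) ->
  x <= y -> Rabs (RInt f x y) <= Gf y - Gf x.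
Proof.
  intros Cf Cg Dg Hfg Hxy.
  assert (E : RInt g x y = Gf y - Gf x).
  { apply is_RInt_unique. apply (is_RInt_derive Gf g). intros; apply Dg. intros; apply Cg. }
  rewrite <- E.
  eapply Rle_trans. apply abs_RInt_le. auto. apply (ex_RInt_continuous (V := R_CompleteNormedModule)); intros; apply Cf.
  apply RInt_le. auto.
  apply (ex_RInt_continuous (V := R_CompleteNormedModule)); intros. apply continuous_Rabs_comp, Cf.
  apply (ex_RInt_continuous (V := R_CompleteNormedModule)); intros; apply Cg.
  intros; apply Hfg.
Qed.

Lemma cmp (f g Gf : R -> R) a b :
  (forall x, continuous f x) -> (forall x, continuous g x) ->
  (forall x, is_derive Gf x (g x)) -> (forall x, Rabs (f x) <= g x) ->
  filterlim Gf (Rbar_locally m_infty) (locally a) ->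
  filterlim Gf (Rbar_locally p_infty) (locally b) ->
  ex_RInt_gen f (Rbar_locally m_infty) (Rbar_locally p_infty).
Proof.
  intros Cf Cg Dg Hfg Ha Hb.
  set (F := fun x => RInt f 0 x).
  assert (DF : forall x, is_derive F x (f x)).
  { intro x. apply (is_derive_RInt f F 0 x). apply filter_forall. intro t.
    apply (RInt_correct (V := R_CompleteNormedModule)).
    apply (ex_RInt_continuous (V := R_CompleteNormedModule)); intros; apply Cf. apply Cf. }
  assert (Bd : forall x y, Rabs (F y - F x) <= Rabs (Gf y - Gf x)).
  { assert (K : forall x y, x <= y -> Rabs (F y - F x) <= Rabs (Gf y - Gf x)).
    { intros x y Hxy. unfold F.
      assert (E : RInt f 0 y - RInt f 0 x = RInt f x y).
      { rewrite <- (RInt_Chasles f 0 x y). unfold plus; simpl. ring.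
        apply (ex_RInt_continuous (V := R_CompleteNormedModule)); intros; apply Cf.
        apply (ex_RInt_continuous (V := R_CompleteNormedModule)); intros; apply Cf. }
      rewrite E. eapply Rle_trans. apply (RInt_bound f g Gf); auto.
      apply Rle_abs. }
    intros x y. destruct (Rle_dec x y). apply K; auto.
    rewrite (Rabs_minus_sym (F y)), (Rabs_minus_sym (Gf y)). apply K; lra. }
  assert (Lim : forall z a, ProperFilter (Rbar_locally z) ->
     filterlim Gf (Rbar_locally z) (locally a) -> exists l, filterlim F (Rbar_locally z) (locally l)).
  { intros z a0 PF HG. apply (filterlim_locally_cauchy (F := Rbar_locally z)).
    intros eps. assert (He : 0 < eps / 2) by (pose proof (cond_pos eps); lra).
    exists (fun x => ball a0 (mkposreal _ He) (Gf x)). split.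
    apply (proj1 (filterlim_locally Gf a0) HG).
    intros u v Hu Hv. change (Rabs (F v - F u) < eps).
    change (Rabs (Gf u - a0) < eps / 2) in Hu. change (Rabs (Gf v - a0) < eps / 2) in Hv.
    eapply Rle_lt_trans. apply Bd.
    replace (Gf v - Gf u) with ((Gf v - a0) - (Gf u - a0)) by ring.
    eapply Rle_lt_trans. apply Rabs_triang. rewrite Rabs_Ropp. lra. }
  destruct (Lim _ _ (Rbar_locally_filter _) Ha) as [la Hla].
  destruct (Lim _ _ (Rbar_locally_filter _) Hb) as [lb Hlb].
  exists (lb - la). apply (ftc_gen f F); auto.
Qed.

Lemma comp01 (Lp phi : R -> R) x :
  (forall y, 0 <= y <= 1 ->
     filterlim Lp (within (fun y => 0 <= y <= 1) (locally y)) (locally (Lp y))) ->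
  (forall y, 0 <= phi y <= 1) -> continuous phi x ->
  continuous (fun t => Lp (phi t)) x.
Proof.
  intros HL Hphi Hc.
  apply (filterlim_comp _ _ _ phi Lp (locally x) (within (fun y => 0 <= y <= 1) (locally (phi x)))).
  - intros P HP. unfold within in HP. apply Hc in HP. unfold filtermap in *.
    eapply filter_imp; [| exact HP]. intros t Ht. apply Ht, Hphi.
  - apply HL, Hphi.
Qed.

Lemma is_derive_lin eta c z : 0 < c -> is_derive (fun z => (eta - z) / c) z (- / c).
Proof. intros Hc. auto_derive. auto. field. lra. Qed.

Lemma is_derive_sglin eta c z : 0 < c ->
  is_derive (fun z => sg ((eta - z) / c)) z (- pZ ((eta - z) / c) / c).
Proof.
  intros Hc.
  pose proof (is_derive_comp sg (fun z => (eta - z) / c) z _ _ (is_derive_sigma ((eta - z)/c)) (is_derive_lin eta c z Hc)) as H.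
  replace (- pZ ((eta - z) / c) / c) with (scal (- / c) (pZ ((eta - z) / c))). exact H.
  unfold scal; simpl; unfold mult; simpl. field. lra.
Qed.

Lemma cont_sglin eta c z : 0 < c -> continuous (fun z => sg ((eta - z) / c)) z.
Proof. intros Hc. apply (ex_derive_continuous (V := R_NormedModule)). eexists. apply is_derive_sglin; auto. Qed.

Lemma cont_pZlin eta c z : 0 < c -> continuous (fun z => pZ ((eta - z) / c)) z.
Proof.
  intros Hc. apply (ex_derive_continuous (V := R_NormedModule)).
  apply (ex_derive_comp pZ (fun z => (eta - z) / c)).
  eexists; apply is_derive_pZ. eexists; apply is_derive_lin; auto.
Qed.

Lemma cont_pZ z : continuous pZ z.
Proof. apply (ex_derive_continuous (V := R_NormedModule)). eexists; apply is_derive_pZ. Qed.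

Lemma lim_sglin_m eta c : 0 < c ->
  filterlim (fun z => sg ((eta - z) / c)) (Rbar_locally m_infty) (locally 1).
Proof. intros Hc. eapply filterlim_comp. apply lin_m; auto. apply lim_sigma_p. Qed.

Lemma lim_sglin_p eta c : 0 < c ->
  filterlim (fun z => sg ((eta - z) / c)) (Rbar_locally p_infty) (locally 0).
Proof. intros Hc. eapply filterlim_comp. apply lin_p; auto. apply lim_sigma_m. Qed.

Definition Aprim eta c K z := - (K * c) * sg ((eta - z) / c).

Lemma Aprim_der eta c K z : 0 < c -> is_derive (Aprim eta c K) z (K * pZ ((eta - z) / c)).
Proof.
  intros Hc. unfold Aprim.
  pose proof (is_derive_scal (fun z => sg ((eta - z) / c)) z (- (K * c)) _ (is_derive_sglin eta c z Hc)) as H.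
  replace (K * pZ ((eta - z) / c)) with (scal (- (K * c)) (- pZ ((eta - z) / c) / c)). exact H.
  unfold scal; simpl; unfold mult; simpl. field. lra.
Qed.

Lemma Aprim_m eta c K : 0 < c -> filterlim (Aprim eta c K) (Rbar_locally m_infty) (locally (- (K * c))).
Proof.
  intros Hc. unfold Aprim.
  assert (H : filterlim (fun x => - (K * c) * x) (locally 1) (locally (- (K * c) * 1))).
  { apply (continuous_mult (fun _ => - (K * c)) (fun x => x)). apply continuous_const. apply continuous_id. }
  rewrite Rmult_1_r in H.
  eapply filterlim_comp; [apply lim_sglin_m; auto | exact H].
Qed.

Lemma Aprim_p eta c K : 0 < c -> filterlim (Aprim eta c K) (Rbar_locally p_infty) (locally 0).
Proof.
  intros Hc. unfold Aprim.
  assert (H : filterlim (fun x => - (K * c) * x) (locally 0) (locally (- (K * c) * 0))).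
  { apply (continuous_mult (fun _ => - (K * c)) (fun x => x)). apply continuous_const. apply continuous_id. }
  rewrite Rmult_0_r in H.
  eapply filterlim_comp; [apply lim_sglin_p; auto | exact H].
Qed.

Lemma cont_KpZ eta c K z : 0 < c -> continuous (fun z => K * pZ ((eta - z) / c)) z.
Proof.
  intros Hc. apply (continuous_mult (fun _ => K) (fun z => pZ ((eta - z) / c))).
  apply continuous_const. apply cont_pZlin; auto.
Qed.

Lemma int_KpZ eta c K : 0 < c ->
  is_RInt_gen (fun z => K * pZ ((eta - z) / c)) (Rbar_locally m_infty) (Rbar_locally p_infty) (K * c).
Proof.
  intros Hc. replace (K * c) with (0 - - (K * c)) by ring.
  apply (ftc_gen _ (Aprim eta c K)).
  intros; apply Aprim_der; auto. intros; apply cont_KpZ; auto.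
  apply Aprim_m; auto. apply Aprim_p; auto.
Qed.

Section Main.
Variables (eta : R) (L Lp : R -> R) (tau M : R).
Hypothesis HLd : forall x, 0 <= x <= 1 -> is_derive L x (Lp x).
Hypothesis HLc : forall x, 0 <= x <= 1 ->
  filterlim Lp (within (fun y => 0 <= y <= 1) (locally x)) (locally (Lp x)).
Hypothesis HM : forall x, 0 <= x <= 1 -> Rabs (Lp x) <= M.
Hypothesis Htau : 0 < tau.

Let u z := (eta - z) / tau.
Definition Gh z := Lp (sg ((eta - z) / tau)) * pZ ((eta - z) / tau) / tau.

Lemma sg01 v : 0 <= sg v <= 1.
Proof. pose proof (sigma_bounds v); lra. Qed.

Lemma G_hat_eq z : G_hat L tau eta z = Gh z.
Proof.
  unfold G_hat, sigma_tau. apply is_derive_unique.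
  assert (Hl : is_derive (fun e => (e - z) / tau) eta (/ tau)).
  { auto_derive. auto. field. lra. }
  pose proof (is_derive_comp sg (fun e => (e - z) / tau) eta _ _ (is_derive_sigma _) Hl) as Hi.
  pose proof (is_derive_comp L (fun e => sg ((e - z) / tau)) eta _ _ (HLd _ (sg01 _)) Hi) as Ho.
  unfold Gh. replace (Lp (sg ((eta - z) / tau)) * pZ ((eta - z) / tau) / tau)
    with (scal (scal (/ tau) (pZ ((eta - z) / tau))) (Lp (sg ((eta - z) / tau)))).
  exact Ho. unfold scal; simpl; unfold mult; simpl. field. lra.
Qed.

Lemma K_der z : is_derive (fun z => - L (sg ((eta - z) / tau))) z (Gh z).
Proof.
  pose proof (is_derive_comp L (fun z => sg ((eta - z) / tau)) z _ _ (HLd _ (sg01 _)) (is_derive_sglin eta tau z Htau)) as H.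
  pose proof (is_derive_opp _ z _ H) as H2.
  unfold Gh. replace (Lp (sg ((eta - z) / tau)) * pZ ((eta - z) / tau) / tau)
    with (opp (scal (- pZ ((eta - z) / tau) / tau) (Lp (sg ((eta - z) / tau))))).
  exact H2. unfold opp, scal; simpl; unfold mult; simpl. field. lra.
Qed.

Lemma cont_Gh z : continuous Gh z.
Proof.
  unfold Gh.
  apply (continuous_mult (fun z => Lp (sg ((eta - z) / tau)) * pZ ((eta - z) / tau)) (fun _ => / tau)).
  apply (continuous_mult (fun z => Lp (sg ((eta - z) / tau))) (fun z => pZ ((eta - z) / tau))).
  apply comp01; auto. intros; apply sg01. apply cont_sglin; auto.
  apply cont_pZlin; auto. apply continuous_const.
Qed.

Lemma L_cont x : 0 <= x <= 1 -> continuous L x.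
Proof. intros. apply (ex_derive_continuous (V := R_NormedModule)). eexists; apply HLd; auto. Qed.

Lemma K_lim (F : (R -> Prop) -> Prop) {FF : Filter F} x : 0 <= x <= 1 ->
  filterlim (fun z => sg ((eta - z) / tau)) F (locally x) ->
  filterlim (fun z => - L (sg ((eta - z) / tau))) F (locally (- L x)).
Proof.
  intros Hx Hs.
  assert (H : filterlim L (locally x) (locally (L x))) by (apply L_cont; auto).
  assert (H2 : filterlim Ropp (locally (L x)) (locally (- L x))).
  { exact (continuous_opp (K := R_AbsRing) (V := R_NormedModule) (fun y : R => y) (L x) (continuous_id (L x))). }
  eapply filterlim_comp; [eapply filterlim_comp; [exact Hs | exact H] | exact H2].
Qed.

Lemma int_Gh : is_RInt_gen Gh (Rbar_locally m_infty) (Rbar_locally p_infty) (L 1 - L 0).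
Proof.
  replace (L 1 - L 0) with (- L 0 - - L 1) by ring.
  apply (ftc_gen _ (fun z => - L (sg ((eta - z) / tau)))).
  apply K_der. apply cont_Gh.
  apply K_lim. apply Rbar_locally_filter. lra. apply lim_sglin_m; auto.
  apply K_lim. apply Rbar_locally_filter. lra. apply lim_sglin_p; auto.
Qed.

Lemma Gh_bound z : Rabs (Gh z) <= M / tau * pZ ((eta - z) / tau).
Proof.
  unfold Gh. pose proof (pZ_bounds ((eta - z) / tau)).
  pose proof (HM _ (sg01 ((eta - z) / tau))).
  unfold Rdiv. rewrite !Rabs_mult, Rabs_inv, (Rabs_right tau), (Rabs_right (pZ _)) by lra.
  assert (0 < / tau) by (apply Rinv_0_lt_compat; lra).
  assert (0 <= Rabs (Lp (sg ((eta - z) * / tau)))) by apply Rabs_pos.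
  unfold Rdiv in *.
  replace (M * / tau * pZ ((eta - z) * / tau)) with (M * pZ ((eta - z) * / tau) * / tau) by ring.
  apply Rmult_le_compat_r; [lra|]. apply Rmult_le_compat_r; lra.
Qed.

Definition h z := Gh z * pZ z.

Lemma ex_h : ex_RInt_gen h (Rbar_locally m_infty) (Rbar_locally p_infty).
Proof.
  apply (cmp h (fun z => M / tau * pZ ((eta - z) / tau)) (Aprim eta tau (M / tau)) (- (M / tau * tau)) 0).
  - intro z. apply (continuous_mult Gh pZ). apply cont_Gh. apply cont_pZ.
  - intro z. apply cont_KpZ; auto.
  - intro z. apply Aprim_der; auto.
  - intro z. unfold h. rewrite Rabs_mult. pose proof (pZ_bounds z).
    rewrite (Rabs_right (pZ z)) by lra. pose proof (Gh_bound z).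
    pose proof (Rabs_pos (Gh z)). nra.
  - apply Aprim_m; auto.
  - apply Aprim_p; auto.
Qed.

Lemma d_bound z : Rabs (h z - Gh z * pZ eta) <= 8 * M * pZ ((eta - z) / (2 * tau)).
Proof.
  unfold h. rewrite <- Rmult_minus_distr_l, Rabs_mult.
  pose proof (Gh_bound z). pose proof (pZ_lip z eta).
  pose proof (pZ_moment ((eta - z) / tau)).
  replace ((eta - z) / tau / 2) with ((eta - z) / (2 * tau)) in H1 by (field; lra).
  assert (E : Rabs (z - eta) = tau * Rabs ((eta - z) / tau)).
  { unfold Rdiv. rewrite Rabs_mult, Rabs_inv, (Rabs_right tau) by lra.
    rewrite Rabs_minus_sym. field. lra. }
  rewrite E in H0.
  pose proof (Rabs_pos (Gh z)). pose proof (Rabs_pos (pZ z - pZ eta)).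
  pose proof (pZ_bounds ((eta - z) / tau)). pose proof (Rabs_pos ((eta - z) / tau)).
  assert (0 <= M) by (pose proof (HM 0 ltac:(lra)); pose proof (Rabs_pos (Lp 0)); lra).
  apply Rle_trans with (M / tau * pZ ((eta - z) / tau) * (tau * Rabs ((eta - z) / tau))).
  apply Rmult_le_compat; auto.
  replace (M / tau * pZ ((eta - z) / tau) * (tau * Rabs ((eta - z) / tau)))
    with (M * (Rabs ((eta - z) / tau) * pZ ((eta - z) / tau))) by (field; lra).
  replace (8 * M * pZ ((eta - z) / (2 * tau))) with (M * (8 * pZ ((eta - z) / (2 * tau)))) by ring.
  apply Rmult_le_compat_l; auto.
Qed.

Lemma bias : Rabs (RInt_gen h (Rbar_locally m_infty) (Rbar_locally p_infty) - pZ eta * (L 1 - L 0))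
  <= 16 * M * tau.
Proof.
  pose proof (RInt_gen_correct _ ex_h) as Hh.
  pose proof (is_RInt_gen_scal _ (pZ eta) _ int_Gh) as Hs.
  pose proof (is_RInt_gen_minus _ _ _ _ Hh Hs) as Hd.
  pose proof (int_KpZ eta (2 * tau) (8 * M) ltac:(lra)) as Hg.
  replace (16 * M * tau) with (8 * M * (2 * tau)) by ring.
  refine (RInt_gen_norm _ _ _ _ _ _ Hd Hg).
  - exists (fun x => x < 0) (fun y => 0 < y). exists 0; auto. exists 0; auto.
    intros x y Hx Hy; simpl; lra.
  - apply filter_forall. intros ab x _.
    change (Rabs (h x - pZ eta * Gh x) <= 8 * M * pZ ((eta - x) / (2 * tau))).
    rewrite (Rmult_comm (pZ eta)). apply d_bound.
Qed.

Lemma per_tau : ex_E_z (G_hat L tau eta) /\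
  Rabs (E_z (G_hat L tau eta) - pZ eta * (L 1 - L 0)) <= 16 * M * tau.
Proof.
  assert (Eq : (fun z => G_hat L tau eta z * pZ z) = h).
  { apply functional_extensionality. intro z. unfold h. rewrite G_hat_eq. reflexivity. }
  unfold ex_E_z, E_z. rewrite Eq. split. apply ex_h. apply bias.
Qed.
End Main.

Definition clamp x := (Rabs x - Rabs (x - 1) + 1) / 2.

Lemma clamp01 x : 0 <= clamp x <= 1.
Proof. unfold clamp, Rabs. repeat destruct Rcase_abs; lra. Qed.

Lemma clamp_id x : 0 <= x <= 1 -> clamp x = x.
Proof. intros. unfold clamp, Rabs. repeat destruct Rcase_abs; lra. Qed.

Lemma clamp_lip x y : Rabs (clamp x - clamp y) <= Rabs (x - y).
Proof. unfold clamp, Rabs. repeat destruct Rcase_abs; lra. Qed.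

Lemma clamp_cont x : continuous clamp x.
Proof.
  apply (filterlim_locally (F := locally x)). intro eps. exists eps. intros y Hy.
  change (Rabs (y - x) < eps) in Hy. change (Rabs (clamp y - clamp x) < eps).
  eapply Rle_lt_trans. apply clamp_lip. auto.
Qed.

Lemma Mbound (Lp : R -> R) :
  (forall x, 0 <= x <= 1 ->
     filterlim Lp (within (fun y => 0 <= y <= 1) (locally x)) (locally (Lp x))) ->
  exists M, forall x, 0 <= x <= 1 -> Rabs (Lp x) <= M.
Proof.
  intros HLc.
  destruct (continuity_ab_maj (fun x => Rabs (Lp (clamp x))) 0 1) as [Mx [HMx _]].
  lra. intros c _. apply continuity_pt_filterlim.
  apply (continuous_Rabs_comp (fun x => Lp (clamp x))).
  apply comp01; auto. apply clamp01. apply clamp_cont.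
  exists (Rabs (Lp (clamp Mx))). intros x Hx. rewrite <- (clamp_id x Hx). apply HMx; auto.
Qed.

Theorem propositionE1 (eta : R) (L : R -> R) (HL : C1_on_01 L) :
  (exists delta : R, 0 < delta /\
     forall tau, 0 < tau < delta -> ex_E_z (G_hat L tau eta)) /\
  filterlim (fun tau => E_z (G_hat L tau eta)) (at_right 0)
    (locally (pZ eta * (L 1 - L 0))) /\
  (exists C delta : R, 0 < delta /\
     forall tau, 0 < tau < delta ->
       Rabs (E_z (G_hat L tau eta) - pZ eta * (L 1 - L 0)) <= C * tau).
Proof.
  destruct HL as [Lp [HLd HLc]].
  destruct (Mbound Lp HLc) as [M HM].
  assert (HM0 : 0 <= M) by (pose proof (HM 0 ltac:(lra)); pose proof (Rabs_pos (Lp 0)); lra).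
  assert (P : forall tau, 0 < tau -> ex_E_z (G_hat L tau eta) /\
    Rabs (E_z (G_hat L tau eta) - pZ eta * (L 1 - L 0)) <= 16 * M * tau).
  { intros tau Ht. apply (per_tau eta L Lp tau M); auto. }
  split; [| split].
  - exists 1. split. lra. intros tau Ht. apply P; lra.
  - apply (filterlim_locally (F := at_right 0)). intro eps.
    assert (Hd : 0 < eps / (16 * M + 1)).
    { apply Rdiv_lt_0_compat. apply cond_pos. lra. }
    exists (mkposreal _ Hd). intros t Ht Ht0.
    change (Rabs (t - 0) < eps / (16 * M + 1)) in Ht.
    rewrite Rminus_0_r, Rabs_right in Ht by lra.
    change (Rabs (E_z (G_hat L t eta) - pZ eta * (L 1 - L 0)) < eps).
    destruct (P t Ht0) as [_ Hb]. eapply Rle_lt_trans. apply Hb.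
    apply Rmult_lt_compat_r with (r := 16 * M + 1) in Ht; [|lra].
    unfold Rdiv in Ht. rewrite Rmult_assoc, Rinv_l in Ht by lra.
    pose proof (cond_pos eps). nra.
  - exists (16 * M), 1. split. lra. intros tau Ht. apply P; lra.
Qed.
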